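(* In the Tempered Gibbs Sampler setting below, let $b=\sup_{i,\boldsymbol{x}} f(x_i|\boldsymbol{x}_{-i})/g(x_i|\boldsymbol{x}_{-i})$. Let $\mathbf{X}\sim fZ$ and $W=w(\mathbf{X})$. Then $$\mathrm{Var}(W)\le b-1\qquad\text{and}\qquad \mathrm{var}(h,SIS)\le b\,\mathrm{var}_f(h),$$ where $\mathrm{var}_f(h)=\mathbb{E}_f[h^2]-\mathbb{E}_f[h]^2$.
   Context: Setting: $f$ is a probability density on $\mathcal{X}=\mathcal{X}_1\times\dots\times\mathcal{X}_d$; for each $i,\boldsymbol{x}_{-i}$, $g(\cdot|\boldsymbol{x}_{-i})$ is a probability density on $\mathcal{X}_i$ absolutely continuous w.r.t. the full conditional $f(\cdot|\boldsymbol{x}_{-i})$. Let $p_i(\boldsymbol{x})=g(x_i|\boldsymbol{x}_{-i})/f(x_i|\boldsymbol{x}_{-i})$, $Z(\boldsymbol{x})=\frac1d\sum_i p_i(\boldsymbol{x})$, $w=1/Z$; $fZ$ is a probability density on $\mathcal{X}$. For $h\in L^1(\mathcal{X},f)$, the self-normalised importance sampling estimator is $\hat h_n^{SIS}=\sum_{i=1}^n w(\boldsymbol{y}^{(i)})h(\boldsymbol{y}^{(i)})/\sum_{i=1}^n w(\boldsymbol{y}^{(i)})$ with $\boldsymbol{y}^{(i)}$ i.i.d. from $fZ$, and $\mathrm{var}(h,SIS)=\lim_{n\to\infty}n\,\mathrm{var}(\hat h_n^{SIS})$, which equals $\mathbb{E}_f[\bar h^2 w]$ with $\bar h=h-\mathbb{E}_f[h]$.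 *)

(* Defs.v *)
From HB Require Import structures.
From mathcomp Require Import all_boot all_order all_algebra.
From mathcomp Require Import all_classical all_reals all_analysis.
Set Implicit Arguments. Unset Strict Implicit. Unset Printing Implicit Defensive.
Import Order.TTheory GRing.Theory Num.Theory.
Local Open Scope classical_set_scope.
Local Open Scope ring_scope.

Section TGS.
Context {R : realType} {d0 : measure_display} {X : measurableType d0}.
Variable (mu : {measure set X -> \bar R}).
Variable (d : nat) (f : X -> R) (fc gc : 'I_d -> X -> R).
(* fc i x = f(x_i | x_{-i}),  gc i x = g(x_i | x_{-i}) *)

Definition p_tgs (i : 'I_d) (x : X) : R := gc i x / fc i x.
Definition Z_tgs (x : X) : R := d%:R^-1 * \sum_(i < d) p_tgs i x.
Definition w_tgs (x : X) : R := (Z_tgs x)^-1.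

Definition ratio_tgs (i : 'I_d) (x : X) : \bar R :=
  if gc i x == 0 then +oo%E else (fc i x / gc i x)%:E.
Definition b_tgs : \bar R :=
  ereal_sup [set r | exists i x, 0 < fc i x /\ r = ratio_tgs i x].

Definition Ef (F : X -> R) : \bar R := \int[mu]_x (f x * F x)%:E.
Definition EfZ (F : X -> R) : \bar R := \int[mu]_x (f x * Z_tgs x * F x)%:E.

Definition VarW : \bar R :=
  EfZ (fun x => (w_tgs x - fine (EfZ w_tgs)) ^+ 2).

Definition var_f (h : X -> R) : \bar R :=
  Ef (fun x => (h x - fine (Ef h)) ^+ 2).

Definition var_SIS (h : X -> R) : \bar R :=
  Ef (fun x => (h x - fine (Ef h)) ^+ 2 * w_tgs x).

End TGS.

(* Main.v *)
Require Import Defs.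
From HB Require Import structures.
From mathcomp Require Import all_boot all_order all_algebra.
From mathcomp Require Import all_classical all_reals all_analysis.
From mathcomp Require Import ring lra measurable_realfun.
Import Order.TTheory GRing.Theory Num.Theory.
Local Open Scope classical_set_scope.
Local Open Scope ring_scope.

Lemma measurable_inv_R (R : realType) : measurable_fun setT (@GRing.inv R).
Proof.
have -> : [set: R] = ~` [set 0] `|` [set 0] by rewrite setUC setUv.
apply/measurable_funU.
- by apply: measurableC.
- by [].
split; last exact: measurable_fun_set1.
apply: measurable_realfun.open_continuous_measurable_fun.
  by rewrite openC; apply: accessible_closed_set1; apply: hausdorff_accessible; exact: norm_hausdorff.
move=> x; rewrite inE /= => /eqP x0.
exact: inv_continuous.
Qed.

Theorem proposition2 (R : realType) (d0 : measure_display) (X : measurableType d0)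
  (mu : {measure set X -> \bar R}) (d : nat)
  (f : X -> R) (fc gc : 'I_d -> X -> R) (h : X -> R)
  (d_gt0 : (0 < d)%N)
  (f_ge0 : forall x, 0 <= f x)
  (f_meas : measurable_fun setT f)
  (f_prob : (\int[mu]_x (f x)%:E = 1)%E)
  (fc_ge0 : forall i x, 0 <= fc i x)
  (gc_ge0 : forall i x, 0 <= gc i x)
  (fc_meas : forall i, measurable_fun setT (fc i))
  (gc_meas : forall i, measurable_fun setT (gc i))
  (fc_pos : forall i x, 0 < f x -> 0 < fc i x)
  (g_ac : forall i x, fc i x = 0 -> gc i x = 0)
  (fZ_prob : (\int[mu]_x (f x * Z_tgs fc gc x)%:E = 1)%E)
  (h_meas : measurable_fun setT h)
  (h_int : mu.-integrable setT (fun x => (f x * h x)%:E)) :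
  (VarW mu f fc gc <= b_tgs fc gc - 1)%E /\
  (var_SIS mu f fc gc h <= b_tgs fc gc * var_f mu f h)%E.
Proof.
set Z := Z_tgs fc gc.
set w := w_tgs fc gc.
have mZ : measurable_fun setT Z.
  rewrite /Z /Z_tgs.
  apply: measurable_realfun.measurable_funM; first exact: measurable_cst.
  apply: measurable_sum => i.
  rewrite /p_tgs; apply: measurable_realfun.measurable_funM => //.
  exact: measurableT_comp (measurable_inv_R R) (fc_meas i).
have mw : measurable_fun setT w.
  exact: measurableT_comp (measurable_inv_R R) mZ.
have [x0 fx0] : exists x0, 0 < f x0.
  case: (pselect (exists x0, 0 < f x0)) => // hn.
  have : (\int[mu]_x (f x)%:E = 0)%E.
    rewrite -(integral0 mu setT); apply: eq_integral => x _.
    have := f_ge0 x; rewrite le_eqVlt => /orP[/eqP <-//|fx].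
    by exfalso; apply: hn; exists x.
  by rewrite f_prob => /eqP; rewrite onee_eq0.
pose i0 : 'I_d := Ordinal d_gt0.
have b_ge0 : (0 <= b_tgs fc gc)%E.
  apply: le_trans (_ : ratio_tgs fc gc i0 x0 <= _)%E.
    rewrite /ratio_tgs; case: ifPn => // _.
    by rewrite lee_fin divr_ge0.
  by apply: ereal_sup_ubound; exists i0, x0; split => //; exact: fc_pos.
have fin_b r : b_tgs fc gc = r%:E -> forall x, 0 < f x -> 0 < Z x /\ w x <= r.
  move=> br x fx.
  have hi i : [/\ 0 < r, 0 < fc i x & r^-1 <= gc i x / fc i x].
    have : (ratio_tgs fc gc i x <= r%:E)%E.
      by rewrite -br; apply: ereal_sup_ubound; exists i, x; split => //; exact: fc_pos.
    rewrite /ratio_tgs; case: ifPn => // gne; rewrite lee_fin => hr.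
    have gp : 0 < gc i x by rewrite lt_neqAle eq_sym gne gc_ge0.
    have fp := fc_pos i x fx.
    have r_pos : 0 < r by apply: lt_le_trans hr; exact: divr_gt0.
    split => //.
    by rewrite -invf_div lef_pV2 // posrE ?divr_gt0.
  have [r_pos _ _] := hi i0.
  have hS : d%:R * r^-1 <= \sum_(i < d) p_tgs fc gc i x.
    have -> : d%:R * r^-1 = \sum_(i < d) r^-1.
      by rewrite sumr_const card_ord mulr_natl.
    by apply: ler_sum => i _; have [] := hi i.
  have hZ : r^-1 <= Z x.
    rewrite /Z /Z_tgs.
    have dp : 0 < d%:R :> R by rewrite ltr0n.
    apply: le_trans (ler_wpM2l _ hS); last by rewrite invr_ge0 ltW.
    by rewrite mulrA mulVf ?mul1r // gt_eqF.
  have Zp : 0 < Z x by apply: lt_le_trans hZ; rewrite invr_gt0.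
  split => //.
  by rewrite /w /w_tgs -[r]invrK lef_pV2 // posrE ?invr_gt0.
have Z_ge0 x : 0 <= Z x.
  rewrite /Z /Z_tgs mulr_ge0 ?invr_ge0 ?ler0n //.
  by apply: sumr_ge0 => i _; rewrite /p_tgs divr_ge0.
have w_ge0 x : 0 <= w x by rewrite /w /w_tgs invr_ge0.
have mhb : forall c : R, measurable_fun setT (fun x => (h x - c) ^+ 2).
  move=> c; apply: measurable_realfun.measurable_funX.
  by apply: measurable_realfun.measurable_funB => //; exact: measurable_cst.
split.
- rewrite /VarW /EfZ -/Z -/w.
  case Eb: (b_tgs fc gc) => [r| |]; last 2 first.
  + by rewrite addye // leey.
  + by move: b_ge0; rewrite Eb.
  have key := fin_b r Eb.
  have c1 : fine (\int[mu]_x (f x * Z x * w x)%:E)%E = 1.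
    suff -> : (\int[mu]_x (f x * Z x * w x)%:E = \int[mu]_x (f x)%:E)%E by rewrite f_prob.
    apply: eq_integral => x _; congr EFin.
    have := f_ge0 x; rewrite le_eqVlt => /orP[/eqP <-|fx]; first by rewrite !mul0r.
    have [Zp _] := key x fx.
    by rewrite -mulrA /w /w_tgs mulfV ?mulr1 // gt_eqF.
  rewrite c1.
  set A := (\int[mu]_x (f x * Z x * (w x - 1) ^+ 2)%:E)%E.
  have A0 : (0 <= A)%E.
    apply: integral_ge0 => x _; rewrite lee_fin; apply: mulr_ge0; [exact: mulr_ge0|exact: sqr_ge0].
  have mA : measurable_fun setT (EFin \o (fun x => f x * Z x * (w x - 1) ^+ 2)).
    apply/measurable_realfun.measurable_EFinP.
    apply: measurable_realfun.measurable_funM; first exact: measurable_realfun.measurable_funM.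
    apply: measurable_realfun.measurable_funX.
    by apply: measurable_realfun.measurable_funB => //; exact: measurable_cst.
  have mf : measurable_fun setT (EFin \o f).
    exact/measurable_realfun.measurable_EFinP.
  have mfZ : measurable_fun setT (EFin \o (fun x => f x * Z x)).
    apply/measurable_realfun.measurable_EFinP.
    exact: measurable_realfun.measurable_funM.
  have e1 : (A + 2%:E = \int[mu]_x ((f x * Z x * (w x - 1) ^+ 2)%:E + 2%:E * (f x)%:E))%E.
    rewrite ge0_integralD //; try (by move=> x _; rewrite ?mule_ge0 ?lee_fin ?mulr_ge0 ?sqr_ge0 ?f_ge0 ?Z_ge0 ?w_ge0); try exact: measurable_funeM.
    2: by move=> x _; rewrite lee_fin; apply: mulr_ge0; [exact: mulr_ge0|exact: sqr_ge0].
    by rewrite ge0_integralZl_EFin // ?f_prob ?mule1 // => x _; rewrite lee_fin.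
  have e2 : (r%:E + 1 = \int[mu]_x (r%:E * (f x)%:E + (f x * Z x)%:E))%E.
    have r0 : 0 <= r by move: b_ge0; rewrite Eb lee_fin.
    rewrite ge0_integralD //; try (by move=> x _; rewrite ?mule_ge0 ?lee_fin ?mulr_ge0 ?sqr_ge0 ?f_ge0 ?Z_ge0 ?w_ge0); try exact: measurable_funeM.
    2: by move=> x _; rewrite lee_fin mulr_ge0.
    by rewrite ge0_integralZl_EFin // ?f_prob ?mule1 ?fZ_prob // => x _; rewrite lee_fin.
  have le12 : (A + 2%:E <= r%:E + 1)%E.
    rewrite e1 e2; apply: ge0_le_integral => //.
    - move=> x _; apply: adde_ge0; first by rewrite lee_fin; apply: mulr_ge0; [exact: mulr_ge0|exact: sqr_ge0].
      by apply: mule_ge0; rewrite lee_fin.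
    - apply: emeasurable_funD => //; exact: measurable_funeM.
    - apply: emeasurable_funD => //; exact: measurable_funeM.
    move=> x _; rewrite -!EFinM -!EFinD lee_fin.
    have := f_ge0 x; rewrite le_eqVlt => /orP[/eqP <-|fx]; first by rewrite !(mul0r, mulr0, addr0).
    have [Zp wr] := key x fx.
    have Zw : Z x * w x = 1 by rewrite /w /w_tgs mulfV // gt_eqF.
    have -> : f x * Z x * (w x - 1) ^+ 2 + 2 * f x = f x * w x * (Z x * w x) - 2 * f x * (Z x * w x) + f x * Z x + 2 * f x by ring.
    rewrite Zw !mulr1.
    have : f x * w x <= f x * r by rewrite ler_wpM2l // ltW.
    lra.
  move: A0 le12; case: (A) => [a| |] //=.
  rewrite !lee_fin => a0 ha.
  lra.
- rewrite /var_SIS /var_f /Ef -/w.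
  set m := fine _.
  have g0 x : 0 <= f x * (h x - m) ^+ 2 by rewrite mulr_ge0 // sqr_ge0.
  have G0 x : 0 <= f x * ((h x - m) ^+ 2 * w x) by rewrite mulr_ge0 // mulr_ge0 // sqr_ge0.
  have mg : measurable_fun setT (EFin \o (fun x => f x * (h x - m) ^+ 2)).
    by apply/measurable_EFinP; apply: measurable_funM.
  have mG : measurable_fun setT (EFin \o (fun x => f x * ((h x - m) ^+ 2 * w x))).
    by apply/measurable_EFinP; apply: measurable_funM => //; apply: measurable_funM.
  case Eb: (b_tgs fc gc) => [r| |]; last first.
  + by move: b_ge0; rewrite Eb.
  + set V := (\int[mu]_x (f x * (h x - m) ^+ 2)%:E)%E.
    have V0 : (0 <= V)%E by apply: integral_ge0 => x _; rewrite lee_fin.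
    have [V_eq0|V_ne0] := eqVneq V 0%E; last first.
      by rewrite gt0_mulye ?leey // lt_neqAle eq_sym V_ne0 V0.
    rewrite V_eq0 mule0.
    have ae : ae_eq mu setT (EFin \o (fun x => f x * (h x - m) ^+ 2)) (cst 0%E).
      apply/(ae_eq_integral_abs mu measurableT mg).
      rewrite -[RHS]V_eq0; apply: eq_integral => x _ /=.
      by rewrite ger0_norm.
    have -> : (\int[mu]_x (f x * ((h x - m) ^+ 2 * w x))%:E = \int[mu]_x (cst 0%E) x)%E.
      apply: ae_eq_integral => //.
      apply: filterS ae => x /= hx /hx [] e.
      by rewrite mulrA e mul0r.
    by rewrite integral0.
  + have key := fin_b r Eb.
    have r0 : 0 <= r by move: b_ge0; rewrite Eb lee_fin.
    rewrite -ge0_integralZl_EFin //; last by move=> x _; rewrite lee_fin.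
    apply: ge0_le_integral => //.
    * by move=> x _; rewrite lee_fin.
    * exact: measurable_funeM.
    move=> x _; rewrite -EFinM lee_fin.
    have := f_ge0 x; rewrite le_eqVlt => /orP[/eqP <-|fx].
      by rewrite !(mul0r, mulr0).
    have [_ wr] := key x fx.
    by rewrite mulrA [r * _]mulrC ler_wpM2l.
Qed.
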